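(* Let $A$ be a partial ring, $X=X_A$ with sheaf $\mathcal{O}_X$, and $x=\mathfrak{p}\in X_A$. Then the stalk $\mathcal{O}_{X,x}$ of $\mathcal{O}_X$ at $x$ coincides with the localization $A_{\mathfrak{p}}$.
   Context: A partial ring is a set $A$ with $0$, a set $A_2\subseteq A\times A$ of summable pairs and a partial addition $+\colon A_2\to A$ (with $0$ a unit summable with everything, commutative, and associative in the sense: $(a,b),(a+b,c)\in A_2$ iff $(b,c),(a,b+c)\in A_2$, and then $(a+b)+c=a+(b+c)$), together with a commutative associative multiplication with unit $1$ such that $0\cdot a=0$ and $(a_1,a_2)\in A_2\Rightarrow(a_1x,a_2x)\in A_2$, $(a_1+a_2)x=a_1x+a_2x$. Ideals and prime ideals are defined as for rings (an ideal is a subset $I\ni 0$ closed under sums of summable pairs of its elements and with $AI\subseteq I$; prime: $I\ne A$ and $ab\in I\Rightarrow a\in I$ or $b\in I$). For a multiplicative subset $S$ (containing $1$, closed under products), $S^{-1}A$ is the set of classes $a/s$ ($a\in A,s\in S$) with $a/s=b/t$ iff $uta=usb$ for some $u\in S$, multiplication $\frac{a}{s}\frac{b}{t}=\frac{ab}{st}$, and $(a/s,b/t)$ summable iff $(uta,usb)\in A_2$ for some $u\in S$; $A_{\mathfrak p}=(A\setminus\mathfrak p)^{-1}A$. $X_A$ is the set of prime ideals with the topology generated by $D(a)=\{\mathfrak p: a\notin\mathfrak p\}$. For an open $U\subseteq X_A$, $S_U=\{a\in A: a\notin\mathfrak p\text{ for all }\mathfrak p\in U\}$; $U\mapsto S_U^{-1}A$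 is a presheaf of partial rings $\mathcal{O}'_X$, and $\mathcal{O}_X$ is its sheafification. *)

(* Defs.v *)
From Stdlib Require Import List ClassicalEpsilon.

Set Implicit Arguments.
Unset Strict Implicit.

(* Partial rings.  The partial addition is a total function [padd] whose
   values are only meaningful on summable pairs ([psumm a b]).          *)
Record PartialRing := {
  pr_car :> Type;
  pzero : pr_car;
  pone : pr_car;
  psumm : pr_car -> pr_car -> Prop;
  padd : pr_car -> pr_car -> pr_car;
  pmul : pr_car -> pr_car -> pr_car;
  pzero_unit : forall a, psumm pzero a /\ padd pzero a = a;
  psumm_comm : forall a b, psumm a b -> psumm b a /\ padd a b = padd b a;
  psumm_assoc : forall a b c,
    (psumm a b /\ psumm (padd a b) c) <-> (psumm b c /\ psumm a (padd b c));
  padd_assoc : forall a b c, psumm a b -> psumm (padd a b) c ->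
    padd (padd a b) c = padd a (padd b c);
  pmul_comm : forall a b, pmul a b = pmul b a;
  pmul_assoc : forall a b c, pmul (pmul a b) c = pmul a (pmul b c);
  pmul_one : forall a, pmul pone a = a;
  pmul_zero : forall a, pmul pzero a = pzero;
  pdistr : forall a1 a2 x, psumm a1 a2 ->
    psumm (pmul a1 x) (pmul a2 x) /\ pmul (padd a1 a2) x = padd (pmul a1 x) (pmul a2 x)
}.

Arguments pzero {_}. Arguments pone {_}.
Arguments psumm {_} _ _. Arguments padd {_} _ _. Arguments pmul {_} _ _.

(* Partial-ring structures given by the graphs of their operations
   (zero, one, partial addition, multiplication), used for the
   localizations and stalks, and isomorphisms between them.            *)
Record PRStruct := {
  ps_car :> Type;
  ps_zero : ps_car -> Prop;
  ps_one : ps_car -> Prop;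
  ps_add : ps_car -> ps_car -> ps_car -> Prop;   (* (x,y) summable with sum z *)
  ps_mul : ps_car -> ps_car -> ps_car -> Prop
}.
Arguments ps_zero : clear implicits. Arguments ps_one : clear implicits.
Arguments ps_add : clear implicits. Arguments ps_mul : clear implicits.

Definition pr_iso (M N : PRStruct) (f : M -> N) : Prop :=
  (forall x y, f x = f y -> x = y) /\ (forall y, exists x, f x = y) /\
  (forall x, ps_zero M x <-> ps_zero N (f x)) /\
  (forall x, ps_one M x <-> ps_one N (f x)) /\
  (forall x y z, ps_add M x y z <-> ps_add N (f x) (f y) (f z)) /\
  (forall x y z, ps_mul M x y z <-> ps_mul N (f x) (f y) (f z)).

Definition quot (T : Type) (R : T -> T -> Prop) : Type :=
  {P : T -> Prop | exists x, P = R x}.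
Definition cls (T : Type) (R : T -> T -> Prop) (x : T) : quot R :=
  exist _ (R x) (ex_intro _ x eq_refl).
Definition rep (T : Type) (R : T -> T -> Prop) (q : quot R) : T :=
  proj1_sig (constructive_indefinite_description _ (proj2_sig q)).

Section Localization.
Variables (A : PartialRing) (S : A -> Prop).

Definition locpair := {x : A * A | S (snd x)}.
Definition lp_num (x : locpair) : A := fst (proj1_sig x).
Definition lp_den (x : locpair) : A := snd (proj1_sig x).

Definition locR (x y : locpair) : Prop :=
  exists u, S u /\
    pmul (pmul u (lp_den y)) (lp_num x) = pmul (pmul u (lp_den x)) (lp_num y).

Definition lcls (x : locpair) : quot locR := cls locR x.

Definition Loc : PRStruct := {|
  ps_car := quot locR;
  ps_zero := fun X => exists z, lp_num z = pzero /\ lp_den z = pone /\ X = lcls z;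
  ps_one := fun X => exists z, lp_num z = pone /\ lp_den z = pone /\ X = lcls z;
  ps_add := fun X Y Z => exists (x y z : locpair) (u : A), S u /\
      X = lcls x /\ Y = lcls y /\ Z = lcls z /\
      psumm (pmul (pmul u (lp_den y)) (lp_num x)) (pmul (pmul u (lp_den x)) (lp_num y)) /\
      lp_num z = padd (pmul (pmul u (lp_den y)) (lp_num x))
                      (pmul (pmul u (lp_den x)) (lp_num y)) /\
      lp_den z = pmul (pmul u (lp_den x)) (lp_den y);
  ps_mul := fun X Y Z => exists (x y z : locpair),
      X = lcls x /\ Y = lcls y /\ Z = lcls z /\
      lp_num z = pmul (lp_num x) (lp_num y) /\ lp_den z = pmul (lp_den x) (lp_den y)
|}.
End Localization.

Record Presheaf (X : Type) := {
  sec : (X -> Prop) -> PRStruct;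
  res : forall U V : X -> Prop, (forall x, V x -> U x) -> sec U -> sec V
}.

Arguments sec {X} _ _. Arguments res {X} _ {U V} _ _.

Section Stalks.
Variables (X : Type) (opn : (X -> Prop) -> Prop) (F : Presheaf X).

Definition GermRep (p : X) : Type :=
  {U : X -> Prop & ((opn U /\ U p) * ps_car (sec F U))%type}.
Definition gU (p : X) (g : GermRep p) : X -> Prop := projT1 g.
Definition gs (p : X) (g : GermRep p) : sec F (gU g) := snd (projT2 g).

Definition germR (p : X) (g h : GermRep p) : Prop :=
  exists (W : X -> Prop) (hg : forall x, W x -> gU g x) (hh : forall x, W x -> gU h x),
    opn W /\ W p /\ res F hg (gs g) = res F hh (gs h).

Definition germ (p : X) (U : X -> Prop) (h : opn U /\ U p) (s : sec F U)
  : quot (@germR p) := cls (@germR p) (existT _ U (h, s)).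

Definition Stalk (p : X) : PRStruct := {|
  ps_car := quot (@germR p);
  ps_zero := fun G => exists U (h : opn U /\ U p) s,
      ps_zero (sec F U) s /\ G = germ h s;
  ps_one := fun G => exists U (h : opn U /\ U p) s,
      ps_one (sec F U) s /\ G = germ h s;
  ps_add := fun G H K => exists U (h : opn U /\ U p) s t r,
      ps_add (sec F U) s t r /\ G = germ h s /\ H = germ h t /\ K = germ h r;
  ps_mul := fun G H K => exists U (h : opn U /\ U p) s t r,
      ps_mul (sec F U) s t r /\ G = germ h s /\ H = germ h t /\ K = germ h r
|}.

Definition locally_induced (U : X -> Prop) (s : forall x, U x -> Stalk x) : Prop :=
  forall x, U x -> exists (V : X -> Prop) (hV : opn V), V x /\
    exists t : sec F V, forall y (hyU : U y) (hyV : V y),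
      s y hyU = germ (conj hV hyV) t.

Definition sheaf_car (U : X -> Prop) : Type :=
  {s : forall x, U x -> Stalk x | locally_induced s}.

Definition sheaf_sec (U : X -> Prop) : PRStruct := {|
  ps_car := sheaf_car U;
  ps_zero := fun s => forall x (hx : U x), ps_zero (Stalk x) (proj1_sig s x hx);
  ps_one := fun s => forall x (hx : U x), ps_one (Stalk x) (proj1_sig s x hx);
  ps_add := fun s t r => forall x (hx : U x),
      ps_add (Stalk x) (proj1_sig s x hx) (proj1_sig t x hx) (proj1_sig r x hx);
  ps_mul := fun s t r => forall x (hx : U x),
      ps_mul (Stalk x) (proj1_sig s x hx) (proj1_sig t x hx) (proj1_sig r x hx)
|}.

Definition sheaf_res (U V : X -> Prop) (hVU : forall x, V x -> U x)
  (s : sheaf_car U) : sheaf_car V.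
Proof.
  refine (exist _ (fun x hx => proj1_sig s x (hVU x hx)) _).
  intros x hx.
  destruct (proj2_sig s x (hVU x hx)) as [W [hW [hWx [t ht]]]].
  exists W, hW; split; [exact hWx|]. exists t. intros y hyV hyW. apply ht.
Defined.

Definition Sheafify : Presheaf X := {| sec := sheaf_sec; res := sheaf_res |}.
End Stalks.

Section Spectrum.
Variable A : PartialRing.

Definition ideal (I : A -> Prop) : Prop :=
  I pzero /\
  (forall a b, I a -> I b -> psumm a b -> I (padd a b)) /\
  (forall a x, I x -> I (pmul a x)).

Definition prime_ideal (I : A -> Prop) : Prop :=
  ideal I /\ (exists a, ~ I a) /\ (forall a b, I (pmul a b) -> I a \/ I b).

Definition Spec : Type := {P : A -> Prop | prime_ideal P}.

Definition Dset (a : A) : Spec -> Prop := fun q => ~ proj1_sig q a.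

(* topology generated by the D(a): U open iff every point of U has a
   neighbourhood in U that is a finite intersection of sets D(a). *)
Definition opnX (U : Spec -> Prop) : Prop :=
  forall p, U p -> exists l : list A,
    (forall a, In a l -> Dset a p) /\
    (forall q, (forall a, In a l -> Dset a q) -> U q).

Definition S_U (U : Spec -> Prop) : A -> Prop :=
  fun a => forall q, U q -> ~ proj1_sig q a.

Definition embed_loc (U V : Spec -> Prop) (h : forall q, V q -> U q)
  (z : locpair (S_U U)) : locpair (S_U V) :=
  exist (fun x : A * A => S_U V (snd x)) (proj1_sig z)
    (fun q hq => proj2_sig z q (h q hq)).

Definition Opre : Presheaf Spec := {|
  sec := fun U => Loc (S_U U);
  res := fun U V h x => lcls (embed_loc h (rep x))
|}.

Definition OX : Presheaf Spec := Sheafify opnX Opre.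

Definition Loc_at (p : Spec) : PRStruct := Loc (fun a => ~ proj1_sig p a).
End Spectrum.

(* Main.v *)
Require Import Defs.
From Stdlib Require Import List ClassicalEpsilon ProofIrrelevance FunctionalExtensionality PropExtensionality.

Lemma sig_eq {T : Type} {P : T -> Prop} (a b : sig P) : proj1_sig a = proj1_sig b -> a = b.
Proof. destruct a, b; simpl; intro; subst; f_equal; apply proof_irrelevance. Qed.

Section Q.
Variables (T : Type) (R : T -> T -> Prop).
Hypothesis Rrefl : forall x, R x x.
Hypothesis Rsym : forall x y, R x y -> R y x.
Hypothesis Rtrans : forall x y z, R x y -> R y z -> R x z.

Lemma rep_spec (q : quot R) : proj1_sig q = R (rep q).
Proof. unfold rep. destruct (constructive_indefinite_description _ _) as [x hx]. simpl. exact hx. Qed.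

Lemma cls_rep (q : quot R) : cls R (rep q) = q.
Proof. apply sig_eq. unfold cls; simpl. symmetry; apply rep_spec. Qed.

Lemma rel_rep x : R x (rep (cls R x)).
Proof. pose proof (rep_spec (cls R x)) as H. unfold cls in H; simpl in H. rewrite H. apply Rrefl. Qed.

Lemma cls_eq_iff x y : R x y -> cls R x = cls R y.
Proof.
  intro H. apply sig_eq. unfold cls; simpl. apply functional_extensionality; intro z.
  apply propositional_extensionality; split; intro H'; eauto.
Qed.

Lemma cls_eq_inv x y : cls R x = cls R y -> R x y.
Proof. intro H. apply (f_equal (@proj1_sig _ _)) in H. simpl in H. rewrite H. apply Rrefl. Qed.
End Q.

Section LocL.
Variables (A : PartialRing) (S : A -> Prop).
Hypothesis Smul : forall a b, S a -> S b -> S (pmul a b).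

Lemma locR_refl (x : locpair S) : locR x x.
Proof. exists (lp_den x); split; [exact (proj2_sig x) | reflexivity]. Qed.

Lemma locR_sym (x y : locpair S) : locR x y -> locR y x.
Proof. intros [u [hu e]]; exists u; split; auto. Qed.

Lemma ac1 (X v w a : A) : pmul (pmul (pmul X v) w) a = pmul (pmul v w) (pmul X a).
Proof.
  rewrite (pmul_assoc X v w). rewrite (pmul_comm X (pmul v w)).
  rewrite pmul_assoc. reflexivity.
Qed.

Lemma ac2 (X Y b : A) : pmul Y (pmul X b) = pmul X (pmul Y b).
Proof. rewrite <- !pmul_assoc. rewrite (pmul_comm Y X). reflexivity. Qed.

Lemma locR_trans (x y z : locpair S) : locR x y -> locR y z -> locR x z.
Proof.
  intros [u [hu e1]] [v [hv e2]].
  exists (pmul (pmul u (lp_den y)) v). split.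
  { apply Smul; [apply Smul; [exact hu | exact (proj2_sig y)] | exact hv]. }
  rewrite ac1, e1, ac2, e2. rewrite ac2.
  rewrite <- (pmul_assoc (pmul v (lp_den y))). f_equal.
  rewrite <- (pmul_assoc (pmul v (lp_den y)) u). f_equal.
  rewrite (pmul_comm (pmul v (lp_den y)) u), (pmul_comm v (lp_den y)), pmul_assoc. reflexivity.
Qed.
End LocL.

Lemma locR_mono {A : PartialRing} {S S' : A -> Prop} (hS : forall a, S a -> S' a)
  (x y : locpair S) (x' y' : locpair S') :
  proj1_sig x = proj1_sig x' -> proj1_sig y = proj1_sig y' -> locR x y -> locR x' y'.
Proof.
  intros Hx Hy [u [hu e]]; exists u; split; auto.
  unfold lp_num, lp_den in *. rewrite <- Hx, <- Hy. exact e.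
Qed.
Section Germs.
Variables (X : Type) (opn : (X -> Prop) -> Prop) (F : Presheaf X).
Hypothesis opn_inter : forall U V, opn U -> opn V -> opn (fun x => U x /\ V x).
Hypothesis res_comp : forall U V W (h1 : forall x, V x -> U x) (h2 : forall x, W x -> V x)
  (h3 : forall x, W x -> U x) s, res F h2 (res F h1 s) = res F h3 s.
Variable p : X.

Lemma germR_refl (g : GermRep opn F p) : germR g g.
Proof.
  exists (gU g), (fun x hx => hx), (fun x hx => hx).
  split; [exact (proj1 (fst (projT2 g))) | split; [exact (proj2 (fst (projT2 g))) | reflexivity]].
Qed.

Lemma germR_sym (g h : GermRep opn F p) : germR g h -> germR h g.
Proof. intros [W [hg [hh [o [w e]]]]]. exists W, hh, hg. auto. Qed.

Lemma germR_trans (g h k : GermRep opn F p) : germR g h -> germR h k -> germR g k.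
Proof.
  intros [W1 [hg1 [hh1 [o1 [w1 e1]]]]] [W2 [hh2 [hk2 [o2 [w2 e2]]]]].
  exists (fun x => W1 x /\ W2 x), (fun x hx => hg1 x (proj1 hx)), (fun x hx => hk2 x (proj2 hx)).
  split; [auto | split; [auto |]].
  rewrite <- (res_comp _ _ _ hg1 (fun x (hx : W1 x /\ W2 x) => proj1 hx)).
  rewrite e1.
  rewrite (res_comp _ _ _ hh1 (fun x (hx : W1 x /\ W2 x) => proj1 hx) (fun x hx => hh2 x (proj2 hx))).
  rewrite <- (res_comp _ _ _ hh2 (fun x (hx : W1 x /\ W2 x) => proj2 hx)).
  rewrite e2. apply res_comp.
Qed.

Lemma germ_eq U V (hU : opn U /\ U p) (hV : opn V /\ V p) s t
  (W : X -> Prop) (hg : forall x, W x -> U x) (hh : forall x, W x -> V x) :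
  opn W -> W p -> res F hg s = res F hh t -> germ hU s = germ hV t.
Proof.
  intros o w e. unfold germ. apply cls_eq_iff.
  - intros; eapply germR_sym; eauto.
  - intros; eapply germR_trans; eauto.
  - exists W, hg, hh. auto.
Qed.
End Germs.

Section Spc.
Variable A : PartialRing.

Definition Ul (l : list A) : Spec A -> Prop := fun q => forall a, In a l -> Dset a q.

Lemma opn_Ul l : opnX (Ul l).
Proof. intros q hq; exists l; split; auto. Qed.

Lemma opn_inter (U V : Spec A -> Prop) : opnX U -> opnX V -> opnX (fun x => U x /\ V x).
Proof.
  intros hU hV q [hq1 hq2].
  destruct (hU q hq1) as [l1 [a1 b1]], (hV q hq2) as [l2 [a2 b2]].
  exists (l1 ++ l2); split.
  - intros a ha; apply in_app_iff in ha; destruct ha; auto.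
  - intros r hr; split; [apply b1 | apply b2]; intros a ha; apply hr; apply in_app_iff; auto.
Qed.

Lemma prime_mul (q : Spec A) a b : ~ proj1_sig q a -> ~ proj1_sig q b -> ~ proj1_sig q (pmul a b).
Proof. intros ha hb H. destruct (proj2 (proj2 (proj2_sig q)) a b H); auto. Qed.

Lemma SU_mul (U : Spec A -> Prop) a b : S_U U a -> S_U U b -> S_U U (pmul a b).
Proof. intros ha hb q hq. apply prime_mul; auto. Qed.

Lemma SUl (l : list A) a : In a l -> S_U (Ul l) a.
Proof. intros h q hq. exact (hq a h). Qed.

Lemma lcls_eq (S : A -> Prop) (Smul : forall a b, S a -> S b -> S (pmul a b)) (x y : locpair S) :
  locR x y -> lcls x = lcls y.
Proof.
  intro H. unfold lcls. apply cls_eq_iff; auto.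
  - apply locR_sym. - intros; eapply locR_trans; eauto.
Qed.

Lemma lcls_inv (S : A -> Prop) (x y : locpair S) : lcls x = lcls y -> locR x y.
Proof.
  intro H. apply cls_eq_inv in H; auto. intro z.
  exists (lp_den z); split; [exact (proj2_sig z) | reflexivity].
Qed.

Lemma res_lcls (U V : Spec A -> Prop) (h : forall q, V q -> U q) (z : locpair (S_U U)) :
  res (Opre A) h (lcls z) = lcls (embed_loc h z).
Proof.
  simpl. apply lcls_eq; [apply SU_mul|].
  apply (locR_mono (S:=S_U U)) with (x := rep (lcls z)) (y := z); auto.
  - intros a ha q hq; apply ha; auto.
  - apply locR_sym. unfold lcls. apply rel_rep. apply locR_refl.
Qed.

Lemma Opre_comp : forall U V W (h1 : forall x, V x -> U x) (h2 : forall x, W x -> V x)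
  (h3 : forall x, W x -> U x) s, res (Opre A) h2 (res (Opre A) h1 s) = res (Opre A) h3 s.
Proof.
  intros. simpl in s. rewrite <- (cls_rep _ _ s). fold (lcls (rep s)).
  rewrite !res_lcls. f_equal. apply sig_eq. reflexivity.
Qed.

Lemma OX_comp : forall U V W (h1 : forall x, V x -> U x) (h2 : forall x, W x -> V x)
  (h3 : forall x, W x -> U x) s, res (OX A) h2 (res (OX A) h1 s) = res (OX A) h3 s.
Proof.
  intros. apply sig_eq. simpl.
  apply functional_extensionality_dep; intro x. apply functional_extensionality; intro hx.
  f_equal. apply proof_irrelevance.
Qed.
End Spc.
Section Main.
Variables (A : PartialRing) (p : Spec A).

Definition PS := Stalk (@opnX A) (Opre A).
Definition OS := Stalk (@opnX A) (OX A).
Definition Sp : A -> Prop := fun a => ~ proj1_sig p a.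

Definition gmap (G : OS p) : PS p :=
  let r := rep G in proj1_sig (gs r) p (proj2 (fst (projT2 r))).

Definition hmap (G : PS p) : Loc_at p :=
  let r := rep G in let z := rep (gs r) in
  lcls (S := Sp) (exist (fun x : A * A => Sp (snd x)) (proj1_sig z)
          (proj2_sig z p (proj2 (fst (projT2 r))))).

Definition fmap (G : OS p) : Loc_at p := hmap (gmap G).

Definition toP (U : Spec A -> Prop) (hp : U p) (z : locpair (S_U U)) : locpair Sp :=
  exist (fun x : A * A => Sp (snd x)) (proj1_sig z) (proj2_sig z p hp).

Definition secOf (U : Spec A -> Prop) (o : opnX U) (z : locpair (S_U U)) : sec (OX A) U.
Proof.
  refine (exist _ (fun y hy => germ (F := Opre A) (conj o hy) (lcls z)) _).
  intros x hx. exists U, o. split; [exact hx|]. exists (lcls z). intros y h1 h2.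
  f_equal. apply proof_irrelevance.
Defined.

Lemma Sp_mul a b : Sp a -> Sp b -> Sp (pmul a b).
Proof. apply prime_mul. Qed.

Lemma C0 U (hU : opnX U /\ U p) (s : sec (OX A) U) :
  gmap (germ hU s) = proj1_sig s p (proj2 hU).
Proof.
  unfold gmap.
  pose proof (rel_rep _ _ (germR_refl _ _ (OX A) p) (existT _ U (hU, s))) as R.
  destruct R as [W [hg [hh [oW [Wp E]]]]].
  apply (f_equal (fun s0 : sec (OX A) W => proj1_sig s0 p Wp)) in E.
  simpl in E. unfold germ. 
  match goal with |- proj1_sig _ p ?pf = _ => rewrite (proof_irrelevance _ pf (hh p Wp)) end.
  transitivity (proj1_sig s p (hg p Wp)); [symmetry; exact E|]. f_equal. apply proof_irrelevance.
Qed.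

Lemma C1' V (hV : opnX V /\ V p) (z : locpair (S_U V)) :
  hmap (germ (F := Opre A) hV (lcls z)) = lcls (toP _ (proj2 hV) z).
Proof.
  unfold hmap.
  pose proof (rel_rep _ _ (germR_refl _ _ (Opre A) p) (existT _ V (hV, lcls z))) as R.
  unfold germ.
  set (r := rep (cls (@germR _ _ (Opre A) p) _)) in *.
  destruct R as [W [hg [hh [oW [Wp E]]]]].
  change (res (Opre A) hg (lcls z) = res (Opre A) hh (gs r)) in E.
  rewrite res_lcls in E.
  assert (E2 : gs r = lcls (rep (gs r))) by (symmetry; apply cls_rep).
  rewrite E2, res_lcls in E. clear E2.
  apply lcls_inv in E. destruct E as [u [hu e]].
  symmetry. apply lcls_eq; [apply Sp_mul|].
  exists u. split; [exact (hu p Wp) | exact e].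
Qed.

Lemma C1 U (hU : opnX U /\ U p) (z : locpair (S_U U)) :
  fmap (germ hU (secOf U (proj1 hU) z)) = lcls (toP U (proj2 hU) z).
Proof. unfold fmap; rewrite C0. unfold secOf; cbn [proj1_sig]. rewrite C1'. f_equal. apply sig_eq. reflexivity. Qed.

Lemma res_rep U V (h : forall q, V q -> U q) (t : sec (Opre A) U) :
  res (Opre A) h t = lcls (embed_loc h (rep t)).
Proof. rewrite <- res_lcls. unfold lcls. rewrite cls_rep. reflexivity. Qed.

Lemma C2 (G : OS p) : exists U (hU : opnX U /\ U p) z, G = germ hU (secOf U (proj1 hU) z).
Proof.
  rewrite <- (cls_rep _ _ G). generalize (rep G). intros [U [hU s]].
  destruct s as [sf sl].
  destruct (sl p (proj2 hU)) as [V [hV [Vp [t ht]]]].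
  set (W := fun q => U q /\ V q).
  assert (hW : opnX W /\ W p) by (split; [apply opn_inter; [exact (proj1 hU)| exact hV] | split; [exact (proj2 hU) | exact Vp]]).
  exists W, hW, (embed_loc (fun q (hq : W q) => proj2 hq) (rep t)).
  change (germ hU (exist _ sf sl : sec (OX A) U) = germ hW (secOf W (proj1 hW) (embed_loc (fun q (hq : W q) => proj2 hq) (rep t)))).
  apply (germ_eq _ _ _ (@opn_inter A) (OX_comp A) p U W hU hW _ _ W (fun q hq => proj1 hq) (fun q hq => hq)).
  - exact (proj1 hW).
  - exact (proj2 hW).
  - apply sig_eq; simpl.
    apply functional_extensionality_dep; intro y. apply functional_extensionality; intro hy.
    rewrite (ht y (proj1 hy) (proj2 hy)).
    apply (germ_eq _ _ _ (@opn_inter A) (Opre_comp A) y V W _ _ _ _ W (fun q hq => proj2 hq) (fun q hq => hq)).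
    + exact (proj1 hW).
    + exact hy.
    + rewrite res_rep, res_lcls. f_equal; try (apply sig_eq; reflexivity).
Qed.

Lemma C3 U (hU : opnX U /\ U p) z V (hV : opnX V /\ V p) w :
  lcls (toP U (proj2 hU) z) = lcls (toP V (proj2 hV) w) ->
  germ hU (secOf U (proj1 hU) z) = germ hV (secOf V (proj1 hV) w).
Proof.
  intro H; apply lcls_inv in H; destruct H as [u [hu e]].
  set (W := fun q => U q /\ (V q /\ Ul A (u :: nil) q)).
  assert (oW : opnX W) by (apply opn_inter; [exact (proj1 hU)| apply opn_inter; [exact (proj1 hV)| apply opn_Ul]]).
  assert (SW : S_U W u) by (intros q hq; exact (proj2 (proj2 hq) u (or_introl eq_refl))).
  apply (germ_eq _ _ _ (@opn_inter A) (OX_comp A) p U V hU hV _ _ W (fun q hq => proj1 hq) (fun q hq => proj1 (proj2 hq))).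
  - exact oW.
  - split; [exact (proj2 hU) | split; [exact (proj2 hV) | intros a [<-|[]]; exact hu]].
  - apply sig_eq; simpl.
    apply functional_extensionality_dep; intro y. apply functional_extensionality; intro hy.
    apply (germ_eq _ _ _ (@opn_inter A) (Opre_comp A) y U V _ _ _ _ W (fun q hq => proj1 hq) (fun q hq => proj1 (proj2 hq))).
    + exact oW.
    + exact hy.
    + rewrite !res_lcls. apply lcls_eq; [apply SU_mul|]. exists u; split; [exact SW | exact e].
Qed.

Lemma finj (G1 G2 : OS p) : fmap G1 = fmap G2 -> G1 = G2.
Proof.
  destruct (C2 G1) as [U [hU [z ->]]], (C2 G2) as [V [hV [w ->]]].
  rewrite !C1. apply C3.
Qed.

Definition hUl (l : list A) (hl : forall a, In a l -> Sp a) : opnX (Ul A l) /\ Ul A l p :=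
  conj (opn_Ul A l) hl.

Definition lift (l : list A) (x : locpair Sp) (hx : In (lp_den x) l) : locpair (S_U (Ul A l)) :=
  exist (fun y : A * A => S_U (Ul A l) (snd y)) (proj1_sig x) (SUl A l _ hx).

Lemma back (x : locpair Sp) l hl hx (G : OS p) : fmap G = lcls x ->
  G = germ (hUl l hl) (secOf _ (proj1 (hUl l hl)) (lift l x hx)).
Proof.
  intro H. apply finj. rewrite H, C1. f_equal. apply sig_eq. reflexivity.
Qed.

Lemma fwd U (hU : opnX U /\ U p) (s : sec (OX A) U) V (hV : opnX V /\ V p) (x : locpair (S_U V)) :
  proj1_sig s p (proj2 hU) = germ (F := Opre A) hV (lcls x) -> fmap (germ hU s) = lcls (toP V (proj2 hV) x).
Proof. intro E. unfold fmap. rewrite C0, E. apply C1'. Qed.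

Lemma in1 {T} (a b c d : T) : In a (a :: b :: c :: d :: nil). Proof. simpl; auto. Qed.
Lemma in2 {T} (a b c d : T) : In b (a :: b :: c :: d :: nil). Proof. simpl; auto. Qed.
Lemma in3 {T} (a b c d : T) : In c (a :: b :: c :: d :: nil). Proof. simpl; auto. Qed.
Lemma in4 {T} (a b c d : T) : In d (a :: b :: c :: d :: nil). Proof. simpl; auto. Qed.

Lemma hl4 (x y z : locpair Sp) u (hu : Sp u) :
  forall a, In a (lp_den x :: lp_den y :: lp_den z :: u :: nil) -> Sp a.
Proof.
  intros a ha; destruct ha as [<-|[<-|[<-|[<-|[]]]]];
    [exact (proj2_sig x) | exact (proj2_sig y) | exact (proj2_sig z) | exact hu].
Qed.

Theorem iso : pr_iso fmap.
Proof.
  split; [exact finj|]. split.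
  { intro X. set (x := rep X).
    pose (l := lp_den x :: lp_den x :: lp_den x :: lp_den x :: nil).
    pose proof (hl4 x x x (lp_den x) (proj2_sig x)) as hl.
    exists (germ (hUl l hl) (secOf _ (proj1 (hUl l hl)) (lift l x (in1 _ _ _ _)))).
    rewrite C1. transitivity (lcls x); [f_equal; apply sig_eq; reflexivity | apply cls_rep]. }
  split.
  { intro G. split.
    - intros [U [hU [s [Hz ->]]]].
      destruct (Hz p (proj2 hU)) as [V [hV [s' [[z [hz1 [hz2 ->]]] Es]]]].
      exists (toP V (proj2 hV) z). split; [exact hz1 | split; [exact hz2 | apply fwd; exact Es]].
    - intros [z [hz1 [hz2 Ez]]].
      pose (l := lp_den z :: lp_den z :: lp_den z :: lp_den z :: nil).
      pose proof (hl4 z z z (lp_den z) (proj2_sig z)) as hl.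
      rewrite (back z l hl (in1 _ _ _ _) G Ez).
      exists (Ul A l), (hUl l hl), (secOf _ (proj1 (hUl l hl)) (lift l z (in1 _ _ _ _))).
      split; [|reflexivity].
      intros q hq.
      exists (Ul A l), (conj (proj1 (hUl l hl)) hq), (lcls (lift l z (in1 _ _ _ _))).
      split; [|reflexivity].
      exists (lift l z (in1 _ _ _ _)). split; [exact hz1 | split; [exact hz2 | reflexivity]]. }
  split.
  { intro G. split.
    - intros [U [hU [s [Hz ->]]]].
      destruct (Hz p (proj2 hU)) as [V [hV [s' [[z [hz1 [hz2 ->]]] Es]]]].
      exists (toP V (proj2 hV) z). split; [exact hz1 | split; [exact hz2 | apply fwd; exact Es]].
    - intros [z [hz1 [hz2 Ez]]].
      pose (l := lp_den z :: lp_den z :: lp_den z :: lp_den z :: nil).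
      pose proof (hl4 z z z (lp_den z) (proj2_sig z)) as hl.
      rewrite (back z l hl (in1 _ _ _ _) G Ez).
      exists (Ul A l), (hUl l hl), (secOf _ (proj1 (hUl l hl)) (lift l z (in1 _ _ _ _))).
      split; [|reflexivity].
      intros q hq.
      exists (Ul A l), (conj (proj1 (hUl l hl)) hq), (lcls (lift l z (in1 _ _ _ _))).
      split; [|reflexivity].
      exists (lift l z (in1 _ _ _ _)). split; [exact hz1 | split; [exact hz2 | reflexivity]]. }
  split.
  { intros G H K. split.
    - intros [U [hU [s [t [r [Ha [-> [-> ->]]]]]]]].
      destruct (Ha p (proj2 hU)) as [V [hV [s' [t' [r' [Hl [Es [Et Er]]]]]]]].
      destruct Hl as [x [y [z [u [hu [-> [-> [-> [hs [hn hd]]]]]]]]]].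
      exists (toP V (proj2 hV) x), (toP V (proj2 hV) y), (toP V (proj2 hV) z), u.
      split; [exact (hu p (proj2 hV))|].
      split; [apply fwd; exact Es|]. split; [apply fwd; exact Et|]. split; [apply fwd; exact Er|].
      split; [exact hs|]. split; [exact hn | exact hd].
    - intros [x [y [z [u [hu [Ex [Ey [Ez [hs [hn hd]]]]]]]]]].
      pose (l := lp_den x :: lp_den y :: lp_den z :: u :: nil).
      pose proof (hl4 x y z u hu) as hl.
      rewrite (back x l hl (in1 _ _ _ _) G Ex), (back y l hl (in2 _ _ _ _) H Ey),
        (back z l hl (in3 _ _ _ _) K Ez).
      eexists (Ul A l), (hUl l hl), _, _, _.
      split; [|split; [reflexivity | split; reflexivity]].
      intros q hq.
      exists (Ul A l), (conj (proj1 (hUl l hl)) hq), (lcls (lift l x (in1 _ _ _ _))),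
        (lcls (lift l y (in2 _ _ _ _))), (lcls (lift l z (in3 _ _ _ _))).
      split; [|split; [reflexivity | split; reflexivity]].
      exists (lift l x (in1 _ _ _ _)), (lift l y (in2 _ _ _ _)), (lift l z (in3 _ _ _ _)), u.
      split; [exact (SUl A l u (in4 _ _ _ _))|].
      split; [reflexivity|]. split; [reflexivity|]. split; [reflexivity|].
      split; [exact hs|]. split; [exact hn | exact hd]. }
  { intros G H K. split.
    - intros [U [hU [s [t [r [Ha [-> [-> ->]]]]]]]].
      destruct (Ha p (proj2 hU)) as [V [hV [s' [t' [r' [Hl [Es [Et Er]]]]]]]].
      destruct Hl as [x [y [z [-> [-> [-> [hn hd]]]]]]].
      exists (toP V (proj2 hV) x), (toP V (proj2 hV) y), (toP V (proj2 hV) z).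
      split; [apply fwd; exact Es|]. split; [apply fwd; exact Et|]. split; [apply fwd; exact Er|].
      split; [exact hn | exact hd].
    - intros [x [y [z [Ex [Ey [Ez [hn hd]]]]]]].
      pose (l := lp_den x :: lp_den y :: lp_den z :: lp_den x :: nil).
      pose proof (hl4 x y z (lp_den x) (proj2_sig x)) as hl.
      rewrite (back x l hl (in1 _ _ _ _) G Ex), (back y l hl (in2 _ _ _ _) H Ey),
        (back z l hl (in3 _ _ _ _) K Ez).
      eexists (Ul A l), (hUl l hl), _, _, _.
      split; [|split; [reflexivity | split; reflexivity]].
      intros q hq.
      exists (Ul A l), (conj (proj1 (hUl l hl)) hq), (lcls (lift l x (in1 _ _ _ _))),
        (lcls (lift l y (in2 _ _ _ _))), (lcls (lift l z (in3 _ _ _ _))).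
      split; [|split; [reflexivity | split; reflexivity]].
      exists (lift l x (in1 _ _ _ _)), (lift l y (in2 _ _ _ _)), (lift l z (in3 _ _ _ _)).
      split; [reflexivity|]. split; [reflexivity|]. split; [reflexivity|].
      split; [exact hn | exact hd]. }
Qed.
End Main.

Theorem mainTheorem11 (A : PartialRing) (p : Spec A) :
  exists f : Stalk (@opnX A) (OX A) p -> Loc_at p, pr_iso f.
Proof. exists (fmap A p). apply iso. Qed.
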